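(* Let the premiums $\{X_n, n\geq 1\}$ and the claims $\{Y_n, n\geq 1\}$ be sequences of nonnegative, identically distributed, independent random variables with finite expectations, and let the rates of interest $\{I_n, n\geq 1\}$ be a sequence of i.i.d. nonnegative random variables with finite expectations. Suppose that the sequences $\{X_n\}$, $\{Y_n\}$, $\{I_n\}$ are mutually independent. For $u\geq 0$ define $U_0=u$, $U_n=U_{n-1}(1+I_n)+X_n-Y_n$ for $n\geq 1$, and $\Psi(u)=\mathbb{P}\big(\bigcup_{n=1}^\infty\{U_n<0\}\big)$. If there exists a positive real number $R$ satisfying $$\mathbb{E}\Big(e^{R\left(Y_1-X_1\right)}\Big)\leq 1,$$ then $\Psi(u)\leq e^{-Ru}$ for all $u>0$. *)

(* Defs.v *)
From mathcomp Require Import all_boot all_order all_algebra.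
From mathcomp Require Import all_classical all_reals all_analysis.
Set Implicit Arguments. Unset Strict Implicit. Unset Printing Implicit Defensive.
Import Order.TTheory GRing.Theory Num.Theory.
Local Open Scope classical_set_scope.
Local Open Scope ring_scope.

Definition mutually_independent d (T : measurableType d) (R : realType)
  (P : probability T R) (I : eqType) (F : I -> T -> R) : Prop :=
  forall (J : seq I) (B : I -> set R),
    uniq J -> (forall j, measurable (B j)) ->
    P (\bigcap_(j in [set` J]) (F j @^-1` B j)) =
    (\prod_(j <- J) P (F j @^-1` B j))%E.

Definition identically_distributed d (T : measurableType d) (R : realType)
  (P : probability T R) (F : nat -> T -> R) : Prop :=
  forall n (B : set R), measurable B -> P (F n @^-1` B) = P (F 0%N @^-1` B).

(* The surplus process; index shift: X k, Y k, I k stand for X_{k+1}, ... *)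
Fixpoint surplus (T : Type) (R : realType) (u : R) (X Y I : nat -> T -> R)
  (n : nat) (w : T) : R :=
  match n with
  | 0%N => u
  | k.+1 => surplus u X Y I k w * (1 + I k w) + X k w - Y k w
  end.

Definition ruin_prob d (T : measurableType d) (R : realType)
  (P : probability T R) (u : R) (X Y I : nat -> T -> R) : \bar R :=
  P (\bigcup_(n in [set: nat]) [set w | surplus u X Y I n.+1 w < 0]).

Definition join3 (T : Type) (R : Type) (X Y I : nat -> T -> R)
  (k : nat + nat + nat) : T -> R :=
  match k with
  | inl (inl n) => X n
  | inl (inr n) => Y n
  | inr n => I n
  end.

(* Main.v *)
Require Import Defs.
From mathcomp Require Import all_boot all_order all_algebra.
From mathcomp Require Import all_classical all_reals all_analysis.
From mathcomp Require Import measurable_realfun.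
From mathcomp Require Import ring lra.
Import Order.TTheory GRing.Theory Num.Theory.
Local Open Scope classical_set_scope.
Local Open Scope ring_scope.

Section indep.
Context d (T : measurableType d) (R : realType) (P : probability T R)
  (I : eqType) (F : I -> T -> R).
Hypothesis mF : forall j, measurable_fun setT (F j).
Hypothesis indF : mutually_independent P F.

Definition Gs (S : seq I) : set (set T) :=
  [set A | exists B : I -> set R, (forall j, measurable (B j)) /\
     A = \bigcap_(j in [set` S]) (F j @^-1` B j)].

Lemma bigcap_seq_meas (S : seq I) (f : I -> set T) :
  (forall j, measurable (f j)) -> measurable (\bigcap_(j in [set` S]) f j).
Proof.
move=> mf; elim: S => [|x S IH].
  rewrite (_ : \bigcap_(j in [set` [::]]) f j = setT) //.
  by apply/seteqP; split => y //= _ j.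
rewrite (_ : \bigcap_(j in [set` x :: S]) f j = f x `&` \bigcap_(j in [set` S]) f j).
  exact: measurableI.
apply/seteqP; split => y /=.
  by move=> h; split; [apply: h; exact: mem_head|move=> j js; apply: h; rewrite /= inE js orbT].
by move=> [h1 h2] j /=; rewrite inE => /orP[/eqP ->//|js]; exact: h2.
Qed.

Lemma Gs_meas S A : Gs S A -> measurable A.
Proof.
move=> [B [mB ->]]; apply: bigcap_seq_meas => j.
rewrite -[X in measurable X]setTI; exact: mF.
Qed.

Lemma Gs_T S : Gs S setT.
Proof.
exists (fun _ => setT); split => //.
by apply/seteqP; split => x //= _ j _.
Qed.

Lemma Gs_I S : setI_closed (Gs S).
Proof.
move=> _ _ [B [mB ->]] [C [mC ->]]; exists (fun j => B j `&` C j); split.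
  by move=> j; apply: measurableI.
apply/seteqP; split => x /=.
  by move=> [h1 h2] j js; split; [exact: h1|exact: h2].
by move=> h; split => j js; have [] := h j js.
Qed.

Lemma Gs_sub S : <<s Gs S >> `<=` measurable.
Proof.
apply: smallest_sub; first exact: sigma_algebra_measurable.
by move=> A; exact: Gs_meas.
Qed.

Lemma Gs_prod S1 S2 : uniq (S1 ++ S2) ->
  forall A B, Gs S1 A -> Gs S2 B -> P (A `&` B) = (P A * P B)%E.
Proof.
move=> uS _ _ [B1 [mB1 ->]] [B2 [mB2 ->]].
pose B j := if j \in S1 then B1 j else B2 j.
have mB j : measurable (B j) by rewrite /B; case: ifP.
move: (uS); rewrite cat_uniq => /and3P[u1 /hasPn n12 u2].
have e1 : \bigcap_(j in [set` S1]) (F j @^-1` B1 j) =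
          \bigcap_(j in [set` S1]) (F j @^-1` B j).
  by apply: eq_bigcapr => j /= js; rewrite /B js.
have e2 : \bigcap_(j in [set` S2]) (F j @^-1` B2 j) =
          \bigcap_(j in [set` S2]) (F j @^-1` B j).
  apply: eq_bigcapr => j /= js; rewrite /B.
  by have := n12 j js; rewrite /= => /negbTE ->.
have e3 : \bigcap_(j in [set` S1]) (F j @^-1` B j) `&`
          \bigcap_(j in [set` S2]) (F j @^-1` B j) =
          \bigcap_(j in [set` S1 ++ S2]) (F j @^-1` B j).
  apply/seteqP; split => x /=.
    by move=> [h1 h2] j /=; rewrite mem_cat => /orP[] js; [exact: h1|exact: h2].
  by move=> h; split => j js; apply: h => /=; rewrite mem_cat js ?orbT.
rewrite e1 e2 e3 indF // big_cat /= indF // indF //.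
Qed.


Lemma indep_ext (C G2 : set (set T)) : setI_closed G2 ->
  <<s G2 >> `<=` measurable -> C `<=` measurable ->
  (forall A B, C A -> G2 B -> P (A `&` B) = (P A * P B)%E) ->
  forall A B, C A -> <<s G2 >> B -> P (A `&` B) = (P A * P B)%E.
Proof.
move=> IG sG2 Cm h A B CA sB.
have mA := Cm _ CA.
pose T2 := g_sigma_algebraType G2.
apply: (@dynkin_induction _ T2 G2 (fun B : set T2 => P (A `&` B) = (P A * P B)%E)) => //.
- by rewrite setIT probability_setT mule1.
- by move=> S; apply: h.
- move=> S mS hS.
  have mS' : measurable (S : set T) by apply: sG2.
  have mSc : measurable (~` S : set T) by apply: measurableC.
  have e : P A = (P (A `&` S) + P (A `&` ~` S))%E.
    rewrite -measureU //; try exact: measurableI.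
      by rewrite -setIUr setUv setIT.
    by rewrite setIACA setICr setI0.
  rewrite probability_setC //.
  move: e; rewrite hS.
  have : P A \is a fin_num by rewrite fin_num_measure.
  have : P S \is a fin_num by rewrite fin_num_measure.
  have : P (A `&` ~` S) \is a fin_num by rewrite fin_num_measure //; exact: measurableI.
  move: (P A) (P S) (P (A `&` ~` S)) => [a| |] [b| |] [c| |] //= _ _ _.
  move=> [e]; congr EFin; rewrite mulrBr mulr1; lra.
- move=> G mG tG hG.
  have mG' n : measurable (G n : set T) by apply: sG2; apply: mG.
  rewrite setI_bigcupr !measure_bigcup //; last first.
    apply/trivIsetP => i j _ _ ij.
    by rewrite setIACA setIid; move/trivIsetP: tG => -> //; rewrite setI0.
    by move=> i _; apply: measurableI.
  rewrite (eq_eseriesr (fun i _ => hG i)).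
  have : P A \is a fin_num by rewrite fin_num_measure.
  move: (P A) => [a| |] //= _.
  by rewrite nneseriesZl.
Qed.

Lemma indep_sigma S1 S2 : uniq (S1 ++ S2) ->
  forall A B, <<s Gs S1 >> A -> <<s Gs S2 >> B -> P (A `&` B) = (P A * P B)%E.
Proof.
move=> u.
have step1 : forall A B, Gs S1 A -> <<s Gs S2 >> B -> P (A `&` B) = (P A * P B)%E.
  apply: indep_ext; first exact: Gs_I.
  - exact: Gs_sub.
  - by move=> A; exact: Gs_meas.
  - exact: Gs_prod.
move=> A B sA sB; rewrite setIC muleC.
apply: (@indep_ext (<<s Gs S2 >>) (Gs S1) _ _ _ _ B A sB sA).
- exact: Gs_I.
- exact: Gs_sub.
- exact: Gs_sub.
- by move=> B' A' sB' GA'; rewrite setIC muleC; apply: step1.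
Qed.


Lemma indep_integral S1 S2 (h g : T -> R) : uniq (S1 ++ S2) ->
  (forall x, 0 <= h x) -> (forall x, 0 <= g x) ->
  measurable_fun setT (h : g_sigma_algebraType (Gs S1) -> R) ->
  measurable_fun setT (g : g_sigma_algebraType (Gs S2) -> R) ->
  (\int[P]_x (h x * g x)%:E = \int[P]_x (h x)%:E * \int[P]_x (g x)%:E)%E.
Proof.
move=> u h0 g0 mh mg.
have mi1 : measurable_fun setT (id : T -> (g_sigma_algebraType (Gs S1))).
  by move=> _ B mB; rewrite setTI preimage_id; apply: Gs_sub; exact: mB.
have mi2 : measurable_fun setT (id : T -> (g_sigma_algebraType (Gs S2))).
  by move=> _ B mB; rewrite setTI preimage_id; apply: Gs_sub; exact: mB.
pose i1 : {mfun T >-> (g_sigma_algebraType (Gs S1))} := mfun_Sub (mem_set mi1).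
pose i2 : {mfun T >-> (g_sigma_algebraType (Gs S2))} := mfun_Sub (mem_set mi2).
pose P1 := distribution P i1.
pose P2 := distribution P i2.
pose phi := fun x : T => ((x : (g_sigma_algebraType (Gs S1))), (x : (g_sigma_algebraType (Gs S2)))).
have mphi : measurable_fun setT phi := measurable_fun_pair mi1 mi2.
pose ph : {mfun T >-> ((g_sigma_algebraType (Gs S1)) * (g_sigma_algebraType (Gs S2)))%type} := mfun_Sub (mem_set mphi).
pose Q := distribution P ph.
have mf : measurable_fun setT (EFin \o (fun z : (g_sigma_algebraType (Gs S1) * g_sigma_algebraType (Gs S2))%type => ((h z.1) * (g z.2))%R)).
  apply/measurable_EFinP; apply: measurable_funM.
  - exact: (measurableT_comp mh measurable_fst).
  - exact: (measurableT_comp mg measurable_snd).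
have f0 : forall z, (0 <= (EFin \o (fun z : (g_sigma_algebraType (Gs S1) * g_sigma_algebraType (Gs S2))%type => ((h z.1) * (g z.2))%R)) z)%E by move=> z; rewrite lee_fin mulr_ge0.
transitivity ((\int[Q]_z (EFin \o (fun z : (g_sigma_algebraType (Gs S1) * g_sigma_algebraType (Gs S2))%type => ((h z.1) * (g z.2))%R)) z)%E).
  by rewrite ge0_integral_distribution.
transitivity ((\int[P1 \x P2]_z (EFin \o (fun z : (g_sigma_algebraType (Gs S1) * g_sigma_algebraType (Gs S2))%type => ((h z.1) * (g z.2))%R)) z)%E).
  apply: eq_measure_integral => A mA _; symmetry.
  apply: product_measure_unique => // A1 B1 mA1 mB1.
  change (P (ph @^-1` (A1 `*` B1)) = (P (i1 @^-1` A1) * P (i2 @^-1` B1))%E).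
  rewrite (_ : ph @^-1` (A1 `*` B1) = (A1 : set T) `&` (B1 : set T)) //.
  rewrite (_ : i1 @^-1` A1 = A1) // (_ : i2 @^-1` B1 = B1) //.
  exact: (@indep_sigma S1 S2 u A1 B1 mA1 mB1).
rewrite fubini_tonelli1 //.
transitivity (\int[P1]_x ((h x)%:E * \int[P2]_y (g y)%:E))%E.
  apply: eq_integral => x _; rewrite /fubini_F /=.
  under eq_integral do rewrite EFinM.
  rewrite ge0_integralZl //; [exact/measurable_EFinP|by move=> y _; rewrite lee_fin|by rewrite lee_fin].
rewrite ge0_integralZr //.
- have e1 : (\int[P1]_x (h x)%:E = \int[P]_x (h x)%:E)%E.
    rewrite ge0_integral_distribution //; first exact/measurable_EFinP.
  have e2 : (\int[P2]_x (g x)%:E = \int[P]_x (g x)%:E)%E.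
    rewrite ge0_integral_distribution //; first exact/measurable_EFinP.
  by rewrite -e1 -e2.
- exact/measurable_EFinP.
- by move=> y _; rewrite lee_fin.
- by apply: integral_ge0 => y _; rewrite lee_fin.
Qed.


Lemma Gs_measF S j : j \in S ->
  measurable_fun setT (F j : g_sigma_algebraType (Gs S) -> R).
Proof.
move=> jS _ B mB; rewrite setTI; apply: sub_sigma_algebra.
exists (fun i => if i == j then B else setT); split.
  by move=> i; case: ifP.
apply/seteqP; split => w /=.
  by move=> h i iS; case: eqP => [->//|].
by move=> h; have := h j jS; rewrite eqxx.
Qed.

Lemma Gs_measT S (f : T -> R) :
  measurable_fun setT (f : g_sigma_algebraType (Gs S) -> R) ->
  measurable_fun setT f.
Proof.
move=> mf _ B mB; have := mf measurableT B mB; rewrite !setTI => h.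
apply: Gs_sub; exact: h.
Qed.

End indep.
Arguments Gs {d T R I}.

Lemma id_integral d (T : measurableType d) (R : realType) (P : probability T R)
  (U V : T -> R) (phi : R -> R) :
  measurable_fun setT U -> measurable_fun setT V ->
  measurable_fun setT phi -> (forall x, 0 <= phi x) ->
  (forall B, measurable B -> P (U @^-1` B) = P (V @^-1` B)) ->
  (\int[P]_x (phi (U x))%:E = \int[P]_x (phi (V x))%:E)%E.
Proof.
move=> mU mV mphi phi0 hUV.
pose U' : {mfun T >-> R} := mfun_Sub (mem_set mU).
pose V' : {mfun T >-> R} := mfun_Sub (mem_set mV).
have e1 : (\int[distribution P U']_y (phi y)%:E = \int[P]_x (phi (U x))%:E)%E.
  rewrite ge0_integral_distribution //; first exact/measurable_EFinP.
have e2 : (\int[distribution P V']_y (phi y)%:E = \int[P]_x (phi (V x))%:E)%E.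
  rewrite ge0_integral_distribution //; first exact/measurable_EFinP.
rewrite -e1 -e2; apply: eq_measure_integral => A mA _.
exact: hUV.
Qed.

Fixpoint Wf (T : Type) (R : realType) (X Y : nat -> T -> R) (n : nat) (w : T) : R :=
  match n with 0%N => 0 | k.+1 => Wf T R X Y k w + (Y k w - X k w) end.
Arguments Wf {T R}.

Fixpoint Dset (T : Type) (R : realType) (X Y : nat -> T -> R) (u : R) (n : nat) : set T :=
  match n with
  | 0%N => [set w | Wf X Y 0 w <= u]
  | k.+1 => Dset T R X Y u k `&` [set w | Wf X Y k.+1 w <= u]
  end.
Arguments Dset {T R}.

Lemma surplus_ge (T : Type) (R : realType) (u : R) (X Y I : nat -> T -> R) :
  (forall n w, 0 <= I n w) ->
  forall n w, Dset X Y u n w -> u - Wf X Y n w <= surplus u X Y I n w.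
Proof.
move=> I0; elim=> [|n IH] w /=; first by rewrite subr0.
move=> [Dn Wn]; have := IH w Dn.
have Dn' : Wf X Y n w <= u.
  by move: Dn; clear; case: n => [|n] /= => [//|[]].
move=> h.
have s0 : 0 <= surplus u X Y I n w by lra.
have : surplus u X Y I n w <= surplus u X Y I n w * (1 + I n w).
  by rewrite mulrDr mulr1 lerDl mulr_ge0.
lra.
Qed.

Lemma ruin_sub (T : Type) (R : realType) (u : R) (X Y I : nat -> T -> R) :
  (forall n w, 0 <= I n w) ->
  \bigcup_(n in [set: nat]) [set w | surplus u X Y I n.+1 w < 0] `<=`
  \bigcup_n (~` Dset X Y u n).
Proof.
move=> I0 w [n _ /= hn]; exists n.+1 => // hD.
have := @surplus_ge _ _ u X Y I I0 _ _ hD; rewrite /=.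
have : Wf X Y n.+1 w <= u by case: hD.
rewrite /=; lra.
Qed.

Section ruin.
Context d (T : measurableType d) (R : realType) (P : probability T R)
  (X Y I : nat -> T -> R).
Hypothesis mX : forall n, measurable_fun setT (X n).
Hypothesis mY : forall n, measurable_fun setT (Y n).
Hypothesis mI : forall n, measurable_fun setT (I n).
Hypothesis indF : mutually_independent P (join3 X Y I).
Hypothesis idX : identically_distributed P X.
Hypothesis idY : identically_distributed P Y.
Variables (Rc u : R).
Hypothesis Rc0 : 0 < Rc.
Hypothesis u0 : 0 < u.
Hypothesis I0 : forall n w, 0 <= I n w.
Hypothesis E0 : (\int[P]_w (expR (Rc * (Y 0%N w - X 0%N w)))%:E <= 1)%E.

Let F := join3 X Y I.
Let mF : forall j, measurable_fun setT (F j).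
Proof. by case=> [[]|]. Qed.
Let xi k : (nat + nat + nat)%type := inl (inl k).
Let yi k : (nat + nat + nat)%type := inl (inr k).
Let past N := map xi (iota 0 N) ++ map yi (iota 0 N).

Let uniq_past N : uniq (past N ++ [:: xi N; yi N]).
Proof.
have ix : injective xi by move=> a b [].
have iy : injective yi by move=> a b [].
rewrite /past -catA cat_uniq map_inj_uniq ?iota_uniq //=.
apply/andP; split.
  apply/hasPn => z; rewrite mem_cat => /orP[/mapP[k _ ->]|].
    by apply/mapP => -[k' _] [].
  rewrite !inE => /orP[]/eqP->.
    apply/mapP => -[k']; rewrite mem_iota add0n => /andP[_ lt] [e].
    by move: lt; rewrite e ltnn.
  by apply/mapP => -[k' _] [].
rewrite cat_uniq map_inj_uniq ?iota_uniq //=.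
rewrite andbT orbF; apply/negP => /orP[/mapP[k _] []//|/mapP[k]].
rewrite mem_iota add0n => /andP[_ lt] [e].
by move: lt; rewrite e ltnn.
Qed.


Local Notation TN N := (g_sigma_algebraType (Gs F (past N))).
Local Notation TG N := (g_sigma_algebraType (Gs F [:: xi N; yi N])).

Let mem_x k N : (k < N)%N -> xi k \in past N.
Proof. by move=> kN; rewrite mem_cat map_f // mem_iota. Qed.
Let mem_y k N : (k < N)%N -> yi k \in past N.
Proof. by move=> kN; rewrite mem_cat orbC map_f // mem_iota. Qed.

Let meas_le d' (T' : measurableType d') (f : T' -> R) :
  measurable_fun setT f -> measurable [set w | f w <= u].
Proof.
move=> mf; rewrite (_ : [set w | f w <= u] = f @^-1` `]-oo, u]); last first.
  by apply/seteqP; split => w /=; rewrite in_itv.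
rewrite -[X in measurable X]setTI; apply: mf => //; exact: measurable_itv.
Qed.

Let meas_W N k : (k <= N)%N -> measurable_fun setT (Wf X Y k : TN N -> R).
Proof.
elim: k => [|k IH] kN /=; first exact: measurable_cst.
apply: measurable_funD; first by apply: IH; exact: ltnW.
apply: measurable_funB.
  exact: (@Gs_measF _ _ _ _ F _ (yi k) (mem_y _ _ kN)).
exact: (@Gs_measF _ _ _ _ F _ (xi k) (mem_x _ _ kN)).
Qed.

Let meas_D N k : (k <= N)%N -> measurable (Dset X Y u k : set (TN N)).
Proof.
elim: k => [|k IH] kN /=; first exact: (meas_le _ _ _ (meas_W _ _ kN)).
apply: measurableI; first by apply: IH; exact: ltnW.
exact: (meas_le _ _ _ (meas_W _ _ kN)).
Qed.

Let h N := fun w => \1_(Dset X Y u N) w * expR (Rc * Wf X Y N w).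
Let g N := fun w => expR (Rc * (Y N w - X N w)).
Let c N := fun w => \1_(~` Dset X Y u N) w * expR (Rc * u).
Let f N := fun w => h N w + c N w.

Let meas_h N : measurable_fun setT (h N : TN N -> R).
Proof.
apply: measurable_funM; first by apply: measurable_indic; exact: meas_D.
apply: measurableT_comp; first exact: measurable_expR.
by apply: measurable_funM; [exact: measurable_cst|exact: meas_W].
Qed.

Let meas_g N : measurable_fun setT (g N : TG N -> R).
Proof.
apply: measurableT_comp; first exact: measurable_expR.
apply: measurable_funM; first exact: measurable_cst.
apply: measurable_funB.
  by apply: (@Gs_measF _ _ _ _ F _ (yi N)); rewrite !inE eqxx orbT.
by apply: (@Gs_measF _ _ _ _ F _ (xi N)); rewrite !inE eqxx.
Qed.

Let meas_c N : measurable_fun setT (c N : TN N -> R).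
Proof.
apply: measurable_funM; last exact: measurable_cst.
by apply: measurable_indic; apply: measurableC; exact: meas_D.
Qed.

Let h0 N w : 0 <= h N w.
Proof. by rewrite /h mulr_ge0 // ?expR_ge0. Qed.
Let g0 N w : 0 <= g N w.
Proof. by rewrite /g expR_ge0. Qed.
Let c0 N w : 0 <= c N w.
Proof. by rewrite /c mulr_ge0 // ?expR_ge0. Qed.


Let EgY M : (\int[P]_w (g M w)%:E =
  \int[P]_w (expR (Rc * Y M w))%:E * \int[P]_w (expR (- (Rc * X M w)))%:E)%E.
Proof.
rewrite -(@indep_integral _ _ _ P _ F mF indF [:: yi M] [:: xi M]
  (fun w => expR (Rc * Y M w)) (fun w => expR (- (Rc * X M w)))) //.
- apply: eq_integral => w _; congr EFin.
  by rewrite /g -expRD mulrBr.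
- apply: measurableT_comp; first exact: measurable_expR.
  apply: measurable_funM; first exact: measurable_cst.
  by apply: (@Gs_measF _ _ _ _ F _ (yi M)); rewrite !inE eqxx.
- apply: measurableT_comp; first exact: measurable_expR.
  apply: measurable_funN; apply: measurable_funM; first exact: measurable_cst.
  by apply: (@Gs_measF _ _ _ _ F _ (xi M)); rewrite !inE eqxx.
Qed.

Let Eg N : (\int[P]_w (g N w)%:E <= 1)%E.
Proof.
rewrite EgY.
rewrite (@id_integral _ _ _ P (Y N) (Y 0%N) (fun y => expR (Rc * y))) //; last 2 first.
- apply: measurableT_comp; first exact: measurable_expR.
  by apply: measurable_funM; [exact: measurable_cst|exact: measurable_id].
- by move=> B mB; apply: idY.
rewrite (@id_integral _ _ _ P (X N) (X 0%N) (fun y => expR (- (Rc * y)))) //; last 2 first.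
- apply: measurableT_comp; first exact: measurable_expR.
  apply: measurable_funN.
  by apply: measurable_funM; [exact: measurable_cst|exact: measurable_id].
- by move=> B mB; apply: idX.
by rewrite -EgY.
Qed.


Let ptw N w : f N.+1 w <= c N w + h N w * g N w.
Proof.
rewrite /f /h /c /g /= !indicE !in_setC in_setI.
case: (boolP (w \in Dset X Y u N)) => hD /=; last first.
  by rewrite !mul0r !mul1r addr0 add0r.
case: (boolP (w \in [set w | Wf X Y N.+1 w <= u])) => hW /=.
  by rewrite !mul1r !mul0r !add0r !addr0 -expRD mulrDr.
rewrite ?mul1r ?mul0r ?add0r ?addr0.
have hW' : u < Wf X Y N.+1 w.
  rewrite ltNge; apply/negP => H; move/negP: hW; apply; rewrite in_setE.
  exact: H.
rewrite -expRD -mulrDr ler_expR ler_pM2l //; exact: ltW hW'.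
Qed.


Let mhT N : measurable_fun setT (h N).
Proof. exact: (@Gs_measT _ _ _ _ F mF (past N) _ (meas_h N)). Qed.
Let mcT N : measurable_fun setT (c N).
Proof. exact: (@Gs_measT _ _ _ _ F mF (past N) _ (meas_c N)). Qed.
Let mgT N : measurable_fun setT (g N).
Proof. exact: (@Gs_measT _ _ _ _ F mF _ _ (meas_g N)). Qed.

Let Ef N : (\int[P]_w (f N w)%:E <= 1)%E.
Proof.
elim: N => [|N IH].
  have e : forall w, f 0 w = 1.
    move=> w; rewrite /f /h /c /= !indicE in_setC.
    have -> : w \in Dset X Y u 0 by rewrite in_setE /=; exact: ltW u0.
    by rewrite /= mul1r mul0r addr0 mulr0 expR0.
  under eq_integral do rewrite e.
  by rewrite integral_cst //= mul1e probability_setT.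
apply: le_trans IH.
apply: (@le_trans _ _ (\int[P]_w (c N w + h N w * g N w)%:E)%E).
  apply: ge0_le_integral => //.
  - by move=> w _; rewrite lee_fin /f addr_ge0.
  - apply/measurable_EFinP; rewrite /f; exact: measurable_funD.
  - apply/measurable_EFinP; apply: measurable_funD => //; exact: measurable_funM.
  - by move=> w _; rewrite lee_fin; exact: ptw.
under eq_integral do rewrite EFinD.
rewrite ge0_integralD //; last 4 first.
- by move=> w _; rewrite lee_fin.
- exact/measurable_EFinP.
- by move=> w _; rewrite lee_fin mulr_ge0.
- by apply/measurable_EFinP; exact: measurable_funM.
rewrite (@indep_integral _ _ _ P _ F mF indF (past N) [:: xi N; yi N] (h N) (g N)
  (uniq_past N) (h0 N) (g0 N) (meas_h N) (meas_g N)).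
rewrite /f; under [X in (_ <= X)%E]eq_integral do rewrite EFinD.
rewrite [X in (_ <= X)%E]ge0_integralD //; last 4 first.
- by move=> w _; rewrite lee_fin.
- exact/measurable_EFinP.
- by move=> w _; rewrite lee_fin.
- exact/measurable_EFinP.
rewrite [X in (_ <= X)%E]addeC; apply: leeD => //.
rewrite muleC; apply: gee_pMl => //.
- rewrite ge0_fin_numE; last by apply: integral_ge0 => w _; rewrite lee_fin.
  exact: le_lt_trans (Eg N) (ltey _).
- by apply: integral_ge0 => w _; rewrite lee_fin.
Qed.


Let mDc N : measurable (~` Dset X Y u N : set T).
Proof.
apply: (@Gs_sub _ _ _ _ F mF (past N)).
exact: (@measurableC _ (TN N) _ (meas_D N N (leqnn N))).
Qed.

Let bound_N N : (P (~` Dset X Y u N) <= (expR (- Rc * u))%:E)%E.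
Proof.
have e : (\int[P]_w (c N w)%:E = P (~` Dset X Y u N) * (expR (Rc * u))%:E)%E.
  rewrite /c; under eq_integral do rewrite EFinM.
  rewrite ge0_integralZr //.
  - by rewrite integral_indic // setIT.
  - by apply/measurable_EFinP; exact: measurable_indic.
have : (\int[P]_w (c N w)%:E <= 1)%E.
  apply: le_trans (Ef N); apply: ge0_le_integral => //.
  - by move=> w _; rewrite lee_fin.
  - exact/measurable_EFinP.
  - by apply/measurable_EFinP; rewrite /f; exact: measurable_funD.
  - by move=> w _; rewrite lee_fin /f lerDr.
rewrite e.
have : P (~` Dset X Y u N) \is a fin_num by rewrite fin_num_measure.
move: (P (~` Dset X Y u N)) => [p| |] //= _.
rewrite !lee_fin => H.
by rewrite mulNr expRN -div1r ler_pdivlMr // expR_gt0.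
Qed.

Let nd : nondecreasing_seq (fun n => ~` Dset X Y u n).
Proof.
have h1 n m : (n <= m)%N -> ~` Dset X Y u n `<=` ~` Dset X Y u m.
  move=> nm; apply: subsetC; elim: m nm => [|m IH].
    by rewrite leqn0 => /eqP ->.
  rewrite leq_eqVlt => /orP[/eqP ->//|].
  by rewrite ltnS => /IH; apply: subset_trans => w [].
by move=> n m nm; apply/subsetPset; exact: h1.
Qed.

Let ruin_main : (P (\bigcup_n ~` Dset X Y u n) <= (expR (- Rc * u))%:E)%E.
Proof.
have mU : measurable (\bigcup_n ~` Dset X Y u n) by apply: bigcup_measurable => n _.
have cv := @nondecreasing_cvg_mu _ _ _ P _ mDc mU nd.
rewrite -(cvg_lim _ cv) //; apply: lime_le; first exact: cvgP cv.
by apply: nearW => n; exact: bound_N.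
Qed.

Let ms n : measurable_fun setT (surplus u X Y I n).
Proof.
elim: n => [|n IH] /=; first exact: measurable_cst.
apply: measurable_funB => //; apply: measurable_funD => //.
apply: measurable_funM => //; apply: measurable_funD => //.
Qed.

Lemma ruin_final : (P (\bigcup_(n in [set: nat])
  [set w | (surplus u X Y I n.+1 w < 0)%R]) <= (expR (- Rc * u))%:E)%E.
Proof.
apply: le_trans ruin_main; apply: le_measure; rewrite ?inE.
- apply: bigcup_measurable => n _.
  rewrite (_ : [set w | _] = surplus u X Y I n.+1 @^-1` `]-oo, 0[); last first.
    by apply/seteqP; split => w /=; rewrite in_itv.
  rewrite -[X in measurable X]setTI; apply: ms => //; exact: measurable_itv.
- by apply: bigcup_measurable => n _.
- exact: (@ruin_sub _ _ u X Y I I0).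
Qed.

End ruin.

Theorem mainTheorem7 (d : measure_display) (T : measurableType d)
  (R : realType) (P : probability T R)
  (X Y I : nat -> {RV P >-> R}) (Rc : R) :
  (forall n w, 0 <= X n w) -> (forall n w, 0 <= Y n w) ->
  (forall n w, 0 <= I n w) ->
  (forall n, P.-integrable setT (EFin \o X n)) ->
  (forall n, P.-integrable setT (EFin \o Y n)) ->
  (forall n, P.-integrable setT (EFin \o I n)) ->
  identically_distributed P (fun n => X n : T -> R) ->
  identically_distributed P (fun n => Y n : T -> R) ->
  identically_distributed P (fun n => I n : T -> R) ->
  mutually_independent P
    (join3 (fun n => X n : T -> R) (fun n => Y n : T -> R)
           (fun n => I n : T -> R)) ->
  0 < Rc ->
  ('E_P[fun w => expR (Rc * (Y 0%N w - X 0%N w))] <= 1)%E ->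
  forall u : R, 0 < u ->
    (ruin_prob P u (fun n => X n : T -> R) (fun n => Y n : T -> R)
       (fun n => I n : T -> R) <= (expR (- Rc * u))%:E)%E.
Proof.
move=> X0 Y0 I0 _ _ _ idX idY idI indF Rc0 hE u u0.
rewrite /ruin_prob.
apply: ruin_final => //.
all: try (by move=> n; exact: measurable_funP).
by move: hE; rewrite expectation.unlock.
Qed.
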